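(* If $\mathcal C$ denotes the epireflective subcategory of $\mathbf{Top}$ defined by any one of the separation axioms $T_0$, $T_1$, $T_2$, functionally Hausdorff, then $\mathrm{r}_{\mathcal C}$ preserves arbitrary products of semitopological Mal'tsev spaces: for every family $\{X_i\}$ of semitopological Mal'tsev spaces, the canonical map $\mu_{\mathcal C}\colon\mathrm{r}_{\mathcal C}\prod X_i\to\prod\mathrm{r}_{\mathcal C}X_i$ is a homeomorphism.
   Context: For an epireflective subcategory $\mathcal C$ of $\mathbf{Top}$, $\mathrm{r}_{\mathcal C}X$ is the reflection of $X$ in $\mathcal C$ with universal continuous surjection $\mathrm{r}_{(X,\mathcal C)}$, and $\mu_{\mathcal C}$ is the unique continuous map with $\pi_j\circ\mu_{\mathcal C}=\mathrm{r}_{\mathcal C}(\pi_{X_j})$ for all $j$. A Mal'tsev operation on $X$ is a map $\Phi\colon X^3\to X$ with $\Phi(x,x,y)=\Phi(y,x,x)=y$; a semitopological Mal'tsev space is a space admitting a separately continuous Mal'tsev operation. A space is functionally Hausdorff if distinct points are separated by a real-valued continuous function. *)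

(* Defs.v *)
From HB Require Import structures.
From mathcomp Require Import all_boot all_order all_algebra.
From mathcomp Require Import all_classical all_reals all_analysis.
From mathcomp Require Import Rstruct Rstruct_topology.
Set Implicit Arguments. Unset Strict Implicit. Unset Printing Implicit Defensive.
Local Open Scope classical_set_scope.

Inductive sep_axiom := T0 | T1 | T2 | FunHausdorff.

Definition functionally_hausdorff (X : topologicalType) : Prop :=
  forall x y : X, x <> y ->
    exists f : X -> Rdefinitions.R, continuous f /\ f x <> f y.

Definition inC (c : sep_axiom) (X : topologicalType) : Prop :=
  match c with
  | T0 => @kolmogorov_space X
  | T1 => @accessible_space X
  | T2 => @hausdorff_space X
  | FunHausdorff => functionally_hausdorff X
  end.

Definition is_reflection (c : sep_axiom) (X RX : topologicalType)
    (r : X -> RX) : Prop :=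
  [/\ inC c RX, continuous r, (forall y : RX, exists x, r x = y) &
      forall (Y : topologicalType) (f : X -> Y), inC c Y -> continuous f ->
        exists! g : RX -> Y, continuous g /\ (forall x, g (r x) = f x)].

Definition maltsev_op (X : Type) (Phi : X -> X -> X -> X) : Prop :=
  forall x y : X, Phi x x y = y /\ Phi y x x = y.

Definition separately_continuous (X : topologicalType)
    (Phi : X -> X -> X -> X) : Prop :=
  (forall b c : X, continuous (fun a => Phi a b c)) /\
  (forall a c : X, continuous (fun b => Phi a b c)) /\
  (forall a b : X, continuous (fun c => Phi a b c)).

Definition semitopological_maltsev (X : topologicalType) : Prop :=
  exists Phi : X -> X -> X -> X, maltsev_op Phi /\ separately_continuous Phi.

Definition homeomorphism (X Y : topologicalType) (f : X -> Y) : Prop :=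
  exists g : Y -> X, [/\ continuous f, continuous g,
    (forall x, g (f x) = x) & (forall y, f (g y) = y)].

(* Main.v *)
Require Import Defs.
From HB Require Import structures.
From mathcomp Require Import all_boot all_order all_algebra.
From mathcomp Require Import all_classical all_reals all_analysis.
From mathcomp Require Import Rstruct Rstruct_topology.
Set Implicit Arguments. Unset Strict Implicit. Unset Printing Implicit Defensive.
Local Open Scope classical_set_scope.

Definition qtop (X : topologicalType) (Y : choiceType) (r : X -> Y) : Type := Y.
HB.instance Definition _ (X : topologicalType) (Y : choiceType) (r : X -> Y) :=
  Choice.on (qtop r).

Definition qop (X : topologicalType) (Y : choiceType) (r : X -> Y) : set_system (qtop r) :=
  fun U => open (r @^-1` U).
Arguments qop {X Y} r.
Lemma qopT (X : topologicalType) (Y : choiceType) (r : X -> Y) : qop r setT. Proof. by rewrite /qop preimage_setT; exact: openT. Qed.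
Lemma qopI (X : topologicalType) (Y : choiceType) (r : X -> Y) : setI_closed (qop r). Proof. by move=> A B; rewrite /qop preimage_setI; exact: openI. Qed.
Lemma qop_bigU (X : topologicalType) (Y : choiceType) (r : X -> Y) (I : Type) (f : I -> set (qtop r)) : (forall i, qop r (f i)) -> qop r (\bigcup_i f i).
Proof. by move=> h; rewrite /qop preimage_bigcup; apply: bigcup_open => i _; exact: h. Qed.

HB.instance Definition _ (X : topologicalType) (Y : choiceType) (r : X -> Y) :=
  isOpenTopological.Build (qtop r) (@qopT X Y r) (@qopI X Y r) (@qop_bigU X Y r).

Lemma qtop_open (X : topologicalType) (Y : choiceType) (r : X -> Y) (U : set (qtop r)) :
  open U <-> open (r @^-1` U).
Proof. by []. Qed.

Definition indist (T : topologicalType) (p q : T) :=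
  (forall A, nbhs p A -> A q) /\ (forall A, nbhs q A -> A p).

Lemma kolmo_indist (T : topologicalType) : kolmogorov_space T ->
  forall p q : T, indist p q -> p = q.
Proof.
move=> K p q [h1 h2]; apply/eqP/negPn/negP => /K [A [[]|[]]].
  by rewrite inE => /h1 + ; rewrite inE.
by rewrite inE => /h2 + ; rewrite inE.
Qed.

Lemma indist_cont (T U : topologicalType) (f : T -> U) (p q : T) :
  continuous f -> indist p q -> indist (f p) (f q).
Proof.
move=> cf [h1 h2]; split => A nA.
  exact: (h1 (f @^-1` A) (cf p _ nA)).
exact: (h2 (f @^-1` A) (cf q _ nA)).
Qed.

Lemma inC_indist c (T : topologicalType) : inC c T ->
  forall p q : T, indist p q -> p = q.
Proof.
case: c => /=.
- exact: kolmo_indist.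
- by move=> /accessible_kolmogorov; exact: kolmo_indist.
- by move=> /hausdorff_accessible/accessible_kolmogorov; exact: kolmo_indist.
- move=> H p q pq; apply: contrapT => /H [f [cf fpq]]; apply: fpq.
  apply: (kolmo_indist (accessible_kolmogorov (hausdorff_accessible (@Rhausdorff _)))).
  exact: indist_cont.
Qed.

Lemma inC_inj c (T U : topologicalType) (h : T -> U) :
  continuous h -> injective h -> inC c U -> inC c T.
Proof.
move=> ch ih; case: c => /=.
- move=> K x y xy; have /K [A [[]|[]]] : h x != h y.
    by apply/negP => /eqP /ih /eqP; apply/negP.
  + rewrite !inE => nA yA; exists (h @^-1` A); left; rewrite !inE; split => //.
    exact: ch.
  + rewrite !inE => nA yA; exists (h @^-1` A); right; rewrite !inE; split => //.
    exact: ch.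
- move=> K x y xy; have /K [A [oA xA yA]] : h x != h y.
    by apply/negP => /eqP /ih /eqP; apply/negP.
  exists (h @^-1` A); split.
  + exact: open_comp.
  + by rewrite inE; rewrite inE in xA.
  + by rewrite inE; rewrite inE in yA.
- move=> H p q cl; apply: ih; apply: H => A B nA nB.
  have [z [Az Bz]] := cl _ _ (ch p _ nA) (ch q _ nB).
  by exists (h z).
- move=> H x y xy; have [f [cf fxy]] := H (h x) (h y) (fun e => xy (ih _ _ e)).
  exists (f \o h); split => // z; apply: continuous_comp; [exact: ch | exact: cf].
Qed.


Lemma refl_factor c (X RX : topologicalType) (r : X -> RX) : is_reflection c r ->
  forall (Y : topologicalType) (f : X -> Y), inC c Y -> continuous f ->
  forall a b, r a = r b -> f a = f b.
Proof.
case=> _ _ _ U Y f CY cf a b e.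
have [g [[_ gr] _]] := U Y f CY cf.
by rewrite -!gr e.
Qed.

Lemma refl_quot c (X RX : topologicalType) (r : X -> RX) : is_reflection c r ->
  forall U : set RX, open (r @^-1` U) -> open U.
Proof.
move=> R; have [CRX cr sr U] := R.
have Cq : inC c (qtop r).
  apply: (@inC_inj c _ RX (fun y : qtop r => (y : RX))) => //.
  apply/continuousP => A oA; rewrite qtop_open.
  by move/continuousP: cr; apply.
have cr' : continuous (r : X -> qtop r).
  by apply/continuousP => A; rewrite qtop_open.
have [g [[cg gr] _]] := U _ _ Cq cr'.
have gid : forall y, g y = y by move=> y; have [x <-] := sr y; exact: gr.
move=> V oV.
have -> : V = g @^-1` V.
  by apply/seteqP; split => y /=; rewrite gid.
by move/continuousP: cg; apply; rewrite qtop_open.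
Qed.

Lemma refl_open c (X RX : topologicalType) (r : X -> RX) :
  semitopological_maltsev X -> is_reflection c r ->
  forall U : set X, open U -> open (r @` U).
Proof.
move=> [Phi [MP [c1 [c2 c3]]]] R U oU.
have [CRX cr sr _] := R.
apply: (refl_quot R).
rewrite openE => x [u Uu rux].
pose m := fun t => Phi t x u.
have mx : m x = u by rewrite /m; case: (MP x u).
have : nbhs x (m @^-1` U).
  apply: (c1 x u); apply: open_nbhs_nbhs; split => //; rewrite -/(m x) mx.
  done.
move=> h; rewrite /interior; apply: (filterS _ h) => t /= Um; exists (m t) => //.
have e : r (Phi t x u) = r (Phi t u u).
  apply: (refl_factor R (f := fun s => r (Phi t s u))) (esym rux) => //.
  by move=> z; apply: continuous_comp; [exact: c2 | exact: cr].
by rewrite /m /= e; case: (MP u t) => _ ->.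
Qed.


Definition isbox (I : Type) (X : I -> topologicalType) (x : forall i, X i)
  (V : forall i, set (X i)) :=
  (forall i, open (V i) /\ V i (x i)) /\
  exists L : seq I, forall i, ~ List.In i L -> V i = setT.

Definition Boxf (I : Type) (X : I -> topologicalType) (x : prod_topology X) :
  set_system (prod_topology X) :=
  fun A => exists V, isbox x V /\ forall z : prod_topology X, (forall i, V i (z i)) -> A z.

Lemma Boxf_filter (I : Type) (X : I -> topologicalType) (x : prod_topology X) :
  Filter (Boxf x).
Proof.
constructor.
- exists (fun _ => setT); split; [split; [move=> i; split => //; exact: openT | by exists nil] | by []].
- move=> A B [V [[oV [L VL]] VA]] [W [[oW [M WM]] WB]].
  exists (fun i => V i `&` W i); split; last first.
    by move=> z h; split; [apply: VA => i; case: (h i) | apply: WB => i; case: (h i)].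
  split.
    move=> i; case: (oV i) (oW i) => a1 b1 [a2 b2].
    by split; [exact: openI | split].
  exists (L ++ M) => i nin.
  rewrite VL ?WM ?setTI //.
    by move=> h; apply: nin; apply: List.in_or_app; right.
  by move=> h; apply: nin; apply: List.in_or_app; left.
- move=> A B AB [V [bV VA]]; exists V; split => // z /VA; exact: AB.
Qed.

Lemma nbhs_Boxf (I : Type) (X : I -> topologicalType) (x : prod_topology X)
  (A : set (prod_topology X)) : nbhs x A -> Boxf x A.
Proof.
have FB := Boxf_filter x.
suff : Boxf x --> (x : product_topology_def X) by apply.
apply/cvg_sup => i B; rewrite nbhsE => -[C [oC Cx] CB].
case: oC => D oD DC.
rewrite nbhs_filterE.
exists (@dfwith {classic I} (fun j => set (X j)) (fun _ => setT) i D).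
split; first split.
- move=> j; have [<-|ij] := @eqVneq {classic I} i j; [rewrite dfwithin | rewrite dfwithout //].
  + by split => //; move: Cx; rewrite -DC.
  + by split => //; exact: openT.
- exists [:: i] => j nin; rewrite dfwithout //; apply/negP => /eqP e; apply: nin; left; exact: e.
- move=> z h; apply: CB; rewrite -DC /=; have := h i; rewrite dfwithin; exact.
Qed.

Lemma box_nbhs (I : Type) (X : I -> topologicalType) (y : prod_topology X)
  (V : forall i, set (X i)) : isbox y V ->
  nbhs y (fun z : prod_topology X => forall i, V i (z i)).
Proof.
move=> [oV [L VL]].
suff : nbhs y (fun z : prod_topology X => forall i, List.In i L -> V i (z i)).
  apply: filterS => z h i.
  have [iL|niL] := pselect (List.In i L); first exact: h.
  by rewrite VL.
clear VL; elim: L => [|j L IH].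
  by apply: filterS (@filterT _ _ _) => z _ i [].
have h1 : nbhs y (fun z : prod_topology X => V j (z j)).
  have := @proj_continuous {classic I} X j y (V j).
  apply; apply: open_nbhs_nbhs; split; [exact: (oV j).1 | exact: (oV j).2].
apply: filterS (filterI h1 IH) => z [h2 h3] i [<-|iL]; [exact: h2 | exact: h3].
Qed.


Theorem corollary4p10 (c : sep_axiom) (I : Type) (X : I -> topologicalType)
  (RX : I -> topologicalType) (r : forall i, X i -> RX i)
  (RP : topologicalType) (rP : prod_topology X -> RP)
  (mu : RP -> prod_topology RX) :
  (forall i, semitopological_maltsev (X i)) ->
  (forall i, is_reflection c (r i)) ->
  is_reflection c rP ->
  continuous mu ->
  (forall (x : prod_topology X) (j : I), mu (rP x) j = r j (x j)) ->
  homeomorphism mu.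
Proof.
move=> HM Hr HP cmu Hmur.
pose q := fun x : prod_topology X => (fun j => r j (x j)) : prod_topology RX.
have muq : forall x, mu (rP x) = q x.
  by move=> x; apply: functional_extensionality_dep => j; exact: Hmur.
have [CP cP sP _] := HP.
have sr : forall i y, exists x, r i x = y by move=> i; case: (Hr i).
have half : forall x x', q x = q x' -> forall A, nbhs (rP x') A -> A (rP x).
  move=> x x' e A nA.
  have := cP x' _ nA => /nbhs_Boxf [V [[oV [L VL]] VA]].
  pose mix := fun (L : seq I) i => if `[< List.In i L >] then x' i else x i.
  have mixA : A (rP (mix L)).
    apply: (VA (mix L)) => i; rewrite /mix; case: asboolP => h.
      exact: (oV i).2.
    by rewrite VL.
  suff <- : rP (mix L) = rP x by [].
  clear mixA VA VL; elim: L => [|j L IH].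
    congr rP; apply: functional_extensionality_dep => i; rewrite /mix.
    by case: asboolP => // -[].
  rewrite -IH.
  have rj : forall t, r j t = r j (x' j) ->
      rP (@dfwith {classic I} (fun i => X i) (mix L) j t) = rP (@dfwith {classic I} (fun i => X i) (mix L) j (x' j)).
    move=> t et.
    have := (@refl_factor c (X j) (RX j) (r j) (Hr j) RP
      (fun t => rP (@dfwith {classic I} (fun i => X i) (mix L) j t)) CP).
    apply => //.
    move=> t0; have cd := @dfwith_continuous {classic I} (fun i => X i) (mix L) j t0.
    have cd' : {for t0, continuous (fun t => (@dfwith {classic I} (fun i => X i) (mix L) j t : prod_topology X))}.
      exact: cd.
    exact: (continuous_comp cd' (cP _)).
  have E1 : mix (j :: L) = @dfwith {classic I} (fun i => X i) (mix L) j (x' j).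
    apply: functional_extensionality_dep => i.
    have [<-|ij] := @eqVneq {classic I} j i; [rewrite dfwithin | rewrite dfwithout //].
      by rewrite /mix; case: asboolP => // -[]; left.
    rewrite /mix; case: asboolP => h1; case: asboolP => h2 //.
      by case: h1 => // e'; move: ij; rewrite e' eqxx.
    by exfalso; apply: h1; right.
  have E2 : mix L = @dfwith {classic I} (fun i => X i) (mix L) j (mix L j).
    apply: functional_extensionality_dep => i.
    by have [<-|ij] := @eqVneq {classic I} j i; [rewrite dfwithin | rewrite dfwithout].
  transitivity (rP (@dfwith {classic I} (fun i => X i) (mix L) j (x' j))).
    by congr rP; exact: E1.
  transitivity (rP (@dfwith {classic I} (fun i => X i) (mix L) j (mix L j))); last first.
    by congr rP; exact: (esym E2).
  symmetry; apply: rj.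
  rewrite /mix; case: asboolP => // _.
  by have := congr1 (fun f => f j) e.
have key : forall x x', q x = q x' -> rP x = rP x'.
  move=> x x' e; apply: (inC_indist CP); split => A.
    by apply: half; rewrite e.
  exact: half.
have qs : forall y : prod_topology RX, {x : prod_topology X | q x = y}.
  move=> y; exists (fun i => projT1 (cid (sr i (y i)))).
  apply: functional_extensionality_dep => i; exact: (projT2 (cid (sr i (y i)))).
pose g := fun y => rP (projT1 (qs y)).
exists g; split => //.
- move=> y W nW.
  suff : nbhs y (g @^-1` W) by [].
  pose x0 := projT1 (qs y).
  have e0 : q x0 = y := projT2 (qs y).
  have := cP x0 _ nW => /nbhs_Boxf [V [[oV [L VL]] VA]].
  pose V' := fun i => r i @` V i.
  have nV' : nbhs y (fun z : prod_topology RX => forall i, V' i (z i)).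
    apply: box_nbhs; split.
      move=> i; split; first exact: (refl_open (HM i) (Hr i) (oV i).1).
      rewrite -e0; exists (x0 i) => //; exact: (oV i).2.
    exists L => i niL; rewrite /V' VL //; apply/seteqP; split => // z _.
    by have [t <-] := sr i z; exists t.
  apply: filterS nV' => z hz.
  have hz' : forall i, exists t, V i t /\ r i t = z i.
    by move=> i; case: (hz i) => t ? ?; exists t.
  pose x1 := (fun i => projT1 (cid (hz' i))) : prod_topology X.
  have Vx1 : forall i, V i (x1 i) by move=> i; case: (projT2 (cid (hz' i))).
  have qx1 : q x1 = z.
    by apply: functional_extensionality_dep => i; case: (projT2 (cid (hz' i))).
  rewrite /= /g (key _ x1); first exact: (VA x1 Vx1).
  by rewrite (projT2 (qs z)) qx1.
- move=> p; have [x <-] := sP p.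
  by rewrite /g muq; apply: key; rewrite (projT2 (qs (q x))).
- by move=> y; rewrite /g muq (projT2 (qs y)).
Qed.
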